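(* Let $n\ge1$, $\alpha\in[0,\pi/2]$, and let $p(a,b|x,y)$, $a,x\in\{0,1\}$, $y\in\{0,\dots,n-1\}$, $b\in\{0,1,\varnothing\}$, admit an LHS model for Alice's trusted measurements $\mathrm A^\alpha_{a|x}$, i.e. $p(a,b|x,y)=\sum_\lambda \mathrm{tr}(\mathrm A^\alpha_{a|x}\rho_\lambda)\,p(b|y,\lambda)$ for a finite family of positive semidefinite $2\times2$ matrices $\rho_\lambda$ with $\sum_\lambda\mathrm{tr}\rho_\lambda=1$ and conditional probabilities $p(b|y,\lambda)$. Then $$n\sin\left(\tfrac{\pi}{2n}\right)\mathcal W^\alpha_n\ \le\ \sqrt2\,\sin\left(\tfrac{\pi}{2}\mathcal T_n\right)\gamma(s_\alpha).$$
   Context: $Z,X$ denote the Pauli matrices on $\mathbb C^2$. For $\alpha\in[0,\pi/2]$ and $x\in\{0,1\}$: $A^\alpha_x:=\cos\alpha\,\frac{Z+X}{\sqrt2}+(-1)^x\sin\alpha\,\frac{Z-X}{\sqrt2}$ and $\mathrm A^\alpha_{a|x}:=\frac12(I+(-1)^aA^\alpha_x)$. $s_\alpha:=2(\cos\alpha+\sin\alpha)$, $\gamma(s):=\frac{s+\sqrt{8-s^2}}{4}$. With $\theta_y=y\pi/n$: $\mathcal W^\alpha_n:=\frac1n\sum_{y=0}^{n-1}\sum_{a,b\in\{0,1\}}(-1)^{a+b}\big(\cos\theta_y\,p(a,b|0,y)+\sin\theta_y\,p(a,b|1,y)\big)$ and $\mathcal T_n:=\frac1n\sum_{y=0}^{n-1}\sum_{b\in\{0,1\}}p(b|y)$,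 where $p(b|y)=\sum_a p(a,b|x,y)$. *)

(* Defs.v *)
From HB Require Import structures.
From mathcomp Require Import all_boot all_order all_algebra.
From mathcomp Require Import complex.
From mathcomp Require Import reals trigo.
Set Implicit Arguments. Unset Strict Implicit. Unset Printing Implicit Defensive.
Import Order.TTheory GRing.Theory Num.Theory.
Local Open Scope ring_scope.
Local Open Scope complex_scope.

Section Defs.
Variable R : realType.
Local Notation C := R[i].

Definition pauliZ : 'M[C]_2 := \matrix_(i < 2, j < 2)
  (if i == j then (if i == 0 :> nat then 1 else -1) else 0).
Definition pauliX : 'M[C]_2 := \matrix_(i < 2, j < 2)
  (if i == j then 0 else 1).

Definition Aobs (alpha : R) (x : bool) : 'M[C]_2 :=
  ((cos alpha / Num.sqrt 2)%:C) *: (pauliZ + pauliX)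
  + (((-1) ^+ x * sin alpha / Num.sqrt 2)%:C) *: (pauliZ - pauliX).

Definition Aproj (alpha : R) (a x : bool) : 'M[C]_2 :=
  ((1 / 2 : R)%:C) *: (1%:M + ((-1) ^+ a : C) *: Aobs alpha x).

Definition adjmx m n (M : 'M[C]_(m, n)) : 'M[C]_(n, m) := (map_mx conjc M)^T.

Definition psd (M : 'M[C]_2) : Prop :=
  forall v : 'cV[C]_2, 0 <= (adjmx v *m M *m v) 0 0.

Definition s_alpha (alpha : R) : R := 2 * (cos alpha + sin alpha).
Definition gammaF (s : R) : R := (s + Num.sqrt (8 - s ^+ 2)) / 4.

(* the LHS-model (local hidden state) condition for Alice's trusted
   measurements; b = None stands for the outcome "varnothing" *)
Definition LHS_model (n : nat) (alpha : R)
    (p : bool -> option bool -> bool -> 'I_n -> R) : Prop :=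
  exists (k : nat) (rho : 'I_k -> 'M[C]_2) (pb : 'I_k -> 'I_n -> option bool -> R),
    [/\ (forall l, psd (rho l)),
        \sum_(l < k) \tr (rho l) = 1,
        (forall l y b, 0 <= pb l y b),
        (forall l y, \sum_(b : option bool) pb l y b = 1) &
        (forall a b x y,
           (p a b x y)%:C = \sum_(l < k) \tr (Aproj alpha a x *m rho l) * (pb l y b)%:C)].

Definition sgn (b : bool) : R := (-1) ^+ b.

Definition theta (n : nat) (y : 'I_n) : R := y%:R * pi / n%:R.

Definition Wn (n : nat) (p : bool -> option bool -> bool -> 'I_n -> R) : R :=
  n%:R^-1 * \sum_(y < n) \sum_(a : bool) \sum_(b : bool)
     sgn a * sgn b * (cos (theta y) * p a (Some b) false y
                      + sin (theta y) * p a (Some b) true y).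

(* p(b|y) = sum_a p(a,b|x,y), taken at x = 0 *)
Definition pB (n : nat) (p : bool -> option bool -> bool -> 'I_n -> R)
    (b : option bool) (y : 'I_n) : R := \sum_(a : bool) p a b false y.

Definition Tn (n : nat) (p : bool -> option bool -> bool -> 'I_n -> R) : R :=
  n%:R^-1 * \sum_(y < n) \sum_(b : bool) pB p (Some b) y.

End Defs.

(* Main.v *)
Require Import Defs.
From HB Require Import structures.
From mathcomp Require Import all_boot all_order all_algebra.
From mathcomp Require Import complex.
From mathcomp Require Import reals trigo.
From mathcomp Require Import boolp classical_sets topology normedtype derive.
From mathcomp Require Import lra ring zify.
Import numFieldNormedType.Exports.
Import Order.TTheory GRing.Theory Num.Theory.
Local Open Scope ring_scope.

Section T.
Variable R : realType.
Implicit Types x y a : R.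

Definition pp x := Num.max x 0.
Lemma pp_ge0 x : 0 <= pp x. Proof. by rewrite /pp le_max lexx orbT. Qed.
Lemma le_pp x : x <= pp x. Proof. by rewrite /pp le_max lexx. Qed.
Lemma pp_id x : 0 <= x -> pp x = x. Proof. by move=> h; rewrite /pp max_l. Qed.
Lemma pp_0 x : x <= 0 -> pp x = 0. Proof. by move=> h; rewrite /pp max_r. Qed.
Lemma pp_abs x m : 0 <= m -> pp (`|x| - m) = pp (x - m) + pp (- x - m).
Proof.
move=> m0; case: (lerP 0 x) => hx.
- by rewrite ger0_norm // (@pp_0 (- x - m)) ?addr0 //; lra.
- by rewrite ltr0_norm // (@pp_0 (x - m)) ?add0r //; lra.
Qed.

Lemma opt_sum (F : option bool -> R) :
  \sum_(b : option bool) F b = F None + (F (Some true) + F (Some false)).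
Proof.
rewrite (bigD1 None) //= (bigD1 (Some true)) //= (bigD1 (Some false)) //=.
by rewrite big1 ?addr0 // => -[[]|] //; rewrite ?andbF.
Qed.

Lemma shift_sum (G : nat -> R) N : (forall l, G (l + N)%N = G l) ->
  forall j, \sum_(0 <= l < N) G l = \sum_(0 <= i < N) G (j + i)%N.
Proof.
move=> GP; elim=> [|j IH]; first by apply: eq_bigr => i _; rewrite add0n.
have E1 : \sum_(0 <= i < N.+1) G (j + i)%N = G (j + 0)%N + \sum_(0 <= i < N) G (j + i.+1)%N.
  by rewrite big_nat_recl.
have E2 : \sum_(0 <= i < N.+1) G (j + i)%N = \sum_(0 <= i < N) G (j + i)%N + G (j + N)%N.
  by rewrite big_nat_recr.
have -> : \sum_(0 <= i < N) G (j.+1 + i)%N = \sum_(0 <= i < N) G (j + i.+1)%N.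
  by apply: eq_bigr => i _; rewrite addSnnS.
rewrite GP in E2; rewrite addn0 in E1.
rewrite IH; apply: (addrI (G j)); rewrite -E1 E2 addrC //.
Qed.
Lemma cos_le_pi x y : 0 <= x -> x <= y -> y <= pi -> cos y <= cos x.
Proof.
move=> x0 xy ypi; rewrite leNgt; apply/negP.
rewrite ltr_cos ?in_itv/= ?(le_trans x0 xy) ?(le_trans xy ypi) ?x0 ?ypi//.
by rewrite ltNge xy.
Qed.

Lemma sin_tangent x y : 0 <= x <= pi -> 0 <= y <= pi ->
  sin x <= sin y + cos y * (x - y).
Proof.
move=> /andP[x0 xpi] /andP[y0 ypi].
have dsin : forall a b, a <= b -> exists2 c, c \in `[a, b] & sin b - sin a = cos c * (b - a).
  move=> a b ab; apply: (MVT_segment ab (fun z _ => is_derive_sin z)).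
  by apply/continuous_subspaceT => ?; exact: continuous_sin.
case: (leP x y) => [xy|yx].
- have [c] := dsin _ _ xy; rewrite in_itv/= => /andP[xc cy] E.
  have : cos y <= cos c by apply: cos_le_pi => //; apply: le_trans xc.
  move=> ccy.
  have: cos y * (y - x) <= cos c * (y - x) by apply: ler_wpM2r; lra.
  lra.
- have [c] := dsin _ _ (ltW yx); rewrite in_itv/= => /andP[yc cx] E.
  have : cos c <= cos y by apply: cos_le_pi => //; apply: le_trans cx _.
  move=> ccy.
  have: cos c * (x - y) <= cos y * (x - y) by apply: ler_wpM2r; lra.
  lra.
Qed.

Lemma cos_off a x : 0 <= a <= pi -> a <= x <= pi *+ 2 - a -> cos x <= cos a.
Proof.
move=> /andP[a0 api] /andP[ax xa]; case: (lerP x pi) => xpi.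
  exact: cos_le_pi.
have -> : cos x = cos (pi *+ 2 - x) by rewrite addrC cosD2pi cosN.
apply: cos_le_pi => //.
  rewrite mulr2n in xa *; lra.
rewrite mulr2n in xa *; lra.
Qed.

Lemma cos_on a x : `|x| <= a -> a <= pi -> cos a <= cos x.
Proof. move=> xa api; rewrite -[cos x]cos_norm; apply: cos_le_pi xa api; exact: normr_ge0. Qed.

Lemma arc_sum (t h : R) k :
  sin h *+ 2 * \sum_(0 <= i < k) cos (t + (2 * i%:R + 1 - k%:R) * h)
  = cos t * sin (k%:R * h) *+ 2.
Proof.
pose F i := sin (t + (2 * i%:R - k%:R) * h).
have E : forall i, sin h *+ 2 * cos (t + (2 * i%:R + 1 - k%:R) * h) = F i.+1 - F i.
  move=> i; rewrite /F.
  have -> : t + (2 * i.+1%:R - k%:R) * h = (t + (2 * i%:R + 1 - k%:R) * h) + h.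
    by rewrite -addn1 natrD; ring.
  have -> : t + (2 * i%:R - k%:R) * h = (t + (2 * i%:R + 1 - k%:R) * h) - h.
    by ring.
  rewrite sinD sinB; ring.
rewrite big_distrr /= (eq_bigr _ (fun i _ => E i)) telescope_sumr // /F.
have -> : t + (2 * k%:R - k%:R) * h = t + k%:R * h by ring.
have -> : t + (2 * (0%N)%:R - k%:R) * h = t - k%:R * h by rewrite mulr0 sub0r; ring.
rewrite sinD sinB; ring.
Qed.

Lemma Lsub n (phi : R) (P : {set 'I_n}) : (0 < n)%N ->
  sin (pi / (2 * n%:R)) * \sum_(y in P) `|sin (phi + 2 * y%:R * (pi / (2 * n%:R)))|
   <= sin (#|P|%:R * (pi / (2 * n%:R))).
Proof.
move=> n0.
set h := pi / (2 * n%:R).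
have npos : 0 < n%:R :> R by rewrite ltr0n.
have n1 : 1 <= n%:R :> R by rewrite ler1n.
have hpi : pi = 2 * n%:R * h.
  by rewrite /h mulrCA mulfV ?mulr1 // mulf_neq0 // pnatr_eq0 -lt0n.
have h0 : 0 < h by rewrite /h divr_gt0 // ?pi_gt0 // mulr_gt0.
have pi0 := pi_gt0 R.
set k := #|P|.
have kn : (k <= n)%N by rewrite /k; apply: (leq_trans (max_card _)); rewrite card_ord.
have kR : k%:R <= n%:R :> R by rewrite ler_nat.
have k0 : 0 <= k%:R :> R by [].
have kh0 : 0 <= k%:R * h by rewrite mulr_ge0 // ltW.
have khn : k%:R * h <= n%:R * h by rewrite ler_wpM2r // ltW.
have khpi2 : k%:R * h <= pi / 2 by rewrite hpi; lra.
set mu := cos (k%:R * h).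
have mu0 : 0 <= mu by apply: cos_ge0_pihalf; apply/andP; split; lra.
have sh0 : 0 < sin h.
  by apply: sin_gt0_pi; apply/andP; split => //; rewrite hpi; nra.
have skh0 : 0 <= sin (k%:R * h) by apply: sin_ge0_pi; apply/andP; split; lra.
pose G (l : nat) := pp (sin (phi + 2 * l%:R * h) - mu).
have Gper : forall l, G (l + n.*2)%N = G l.
  move=> l; rewrite /G natrD -muln2 natrM.
  have -> : phi + 2 * (l%:R + n%:R * 2%:R) * h = (phi + 2 * l%:R * h) + pi *+ 2.
    by rewrite hpi mulr2n; ring.
  by rewrite sinD2pi.
have S1 : \sum_(y in P) `|sin (phi + 2 * y%:R * h)|
          <= \sum_(0 <= l < n.*2) G l + k%:R * mu.
  have -> : \sum_(y in P) `|sin (phi + 2 * y%:R * h)|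
      = \sum_(y in P) (`|sin (phi + 2 * y%:R * h)| - mu) + k%:R * mu.
    by rewrite sumrB sumr_const [k%:R * mu]mulr_natl subrK.
  rewrite lerD2r.
  apply: (le_trans (y := \sum_(i in P) pp (`|sin (phi + 2 * i%:R * h)| - mu))).
    by apply: ler_sum => y _; apply: le_pp.
  apply: (le_trans (y := \sum_(i : 'I_n) pp (`|sin (phi + 2 * i%:R * h)| - mu))).
    rewrite [X in _ <= X](bigID (fun y : 'I_n => y \in P)) /= lerDl.
    by apply: sumr_ge0 => y _; apply: pp_ge0.
  have -> : \sum_(y : 'I_n) pp (`|sin (phi + 2 * y%:R * h)| - mu)
      = \sum_(y : 'I_n) (G y + G (y + n)%N).
    apply: eq_bigr => y _; rewrite pp_abs // /G; congr (_ + _).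
    have -> : phi + 2 * (y + n)%N%:R * h = (phi + 2 * y%:R * h) + pi.
      by rewrite natrD hpi; ring.
    by rewrite sinDpi.
  rewrite -(big_mkord xpredT (fun l => G l + G (l + n)%N)) big_split /=.
  rewrite (@big_cat_nat _ _ _ n 0 n.*2) //=; last by rewrite -addnn leq_addr.
  have -> : \sum_(n <= i < n.*2) G i = \sum_(0 <= i < n) G (i + n)%N.
    by rewrite -{1}[n]add0n big_addn -addnn addnK.
  by [].
have p20 : 0 < pi *+ 2 :> R by rewrite mulr2n; lra.
set z := pi / 2 - (k%:R - 1) * h - phi.
set M := (Num.truncn (`|z| / (pi *+ 2))).+1.
have zM : `|z| < (pi *+ 2) *+ M.
  have := Num.Theory.truncnS_gt (`|z| / (pi *+ 2)); rewrite -/M ltr_pdivrMr // => H.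
  by rewrite -[(pi *+ 2) *+ M]mulr_natl.
set z' := z + (pi *+ 2) *+ M.
have z'0 : 0 <= z' + h.
  have : - `|z| <= z by rewrite lerNnormlW.
  rewrite /z'; lra.
set j := Num.truncn ((z' + h) / (2 * h)).
have h2 : 0 < 2 * h by lra.
have /andP[jl ju] := Num.Theory.truncn_itv (divr_ge0 z'0 (ltW h2)).
rewrite -/j ler_pdivlMr // in jl; rewrite -/j ltr_pdivrMr // in ju.
set tau := 2 * j%:R * h - z'.
have tl : - h < tau by rewrite /tau; rewrite -addn1 natrD in ju; lra.
have tu : tau <= h by rewrite /tau; lra.
rewrite (shift_sum G n.*2 Gper j) in S1.
have GE : forall i, G (j + i)%N = pp (cos (tau + (2 * i%:R + 1 - k%:R) * h) - mu).
  move=> i; rewrite /G.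
  have -> : phi + 2 * (j + i)%N%:R * h
    = (tau + (2 * i%:R + 1 - k%:R) * h + pi / 2) + (pi *+ 2) *+ M.
    by rewrite natrD /tau /z' /z; ring.
  by rewrite (periodicn (@sinD2pi R)) sinDpihalf.
rewrite (eq_bigr _ (fun i _ => GE i)) in S1.
have k2n : (k <= n.*2)%N by rewrite -addnn; apply: leq_trans kn (leq_addr _ _).
rewrite (@big_cat_nat _ _ _ k 0 n.*2) /= ?k2n // in S1.
rewrite [X in _ + X + _]big1_seq ?addr0 in S1; last first.
  move=> i /andP[_]; rewrite mem_index_iota => /andP[ki i2n].
  apply: pp_0; rewrite subr_le0 /mu; apply: cos_off.
    by apply/andP; split; lra.
  have kiR : k%:R <= i%:R :> R by rewrite ler_nat.
  have i2nR : i%:R + 1 <= 2 * n%:R :> R.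
    by move: i2n; rewrite -(ler_nat R) -addn1 natrD -muln2 natrM mulrC.
  have A1 : 0 <= (i%:R - k%:R) * h by apply: mulr_ge0; lra.
  have A2 : 0 <= (2 * n%:R - i%:R - 1) * h by apply: mulr_ge0; lra.
  apply/andP; split; rewrite ?hpi ?mulr2n; nra.
rewrite (@eq_big_nat _ _ _ 0 k _ (fun i => cos (tau + (2 * i%:R + 1 - k%:R) * h) - mu))
  in S1; last first.
  move=> i /andP[_ ik]; apply: pp_id; rewrite subr_ge0 /mu; apply: cos_on.
    have ikR : i%:R + 1 <= k%:R :> R by move: ik; rewrite -(ler_nat R) -addn1 natrD.
    have A1 : 0 <= (k%:R - i%:R - 1) * h by apply: mulr_ge0; lra.
    have A2 : 0 <= i%:R * h by apply: mulr_ge0; [rewrite ler0n | lra].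
    rewrite ler_norml; apply/andP; split; nra.
  lra.
rewrite sumrB sumr_const_nat subn0 [k%:R * mu]mulr_natl subrK in S1.
have AS := arc_sum tau h k.
apply: (le_trans (y := sin h * \sum_(0 <= i < k) cos (tau + (2 * i%:R + 1 - k%:R) * h))).
  by apply: ler_wpM2l => //; apply: ltW.
have : cos tau <= 1 := cos_le1 tau.
move: AS; rewrite !mulr2n; nra.
Qed.


Lemma core n (phi : R) (q E : 'I_n -> R) : (0 < n)%N ->
  (forall y : 'I_n, 0 <= q y <= 1) -> (forall y : 'I_n, `|E y| <= q y) ->
  sin (pi / (2 * n%:R)) * \sum_(y : 'I_n) E y * sin (phi + 2 * y%:R * (pi / (2 * n%:R)))
    <= sin (pi / (2 * n%:R) * \sum_(y : 'I_n) q y).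
Proof.
move=> n0 q01 Eq.
have LS := @Lsub n phi.
set h := pi / (2 * n%:R) in LS *.
have npos : 0 < n%:R :> R by rewrite ltr0n.
have hpi : pi = 2 * n%:R * h.
  by rewrite /h mulrCA mulfV ?mulr1 // mulf_neq0 // pnatr_eq0 -lt0n.
have h0 : 0 < h by rewrite /h divr_gt0 // ?pi_gt0 // mulr_gt0.
have pi0 := pi_gt0 R.
have n1 : 1 <= n%:R :> R by rewrite ler1n.
have sh0 : 0 < sin h.
  by apply: sin_gt0_pi; apply/andP; split => //; rewrite hpi; nra.
set m := \sum_(y : 'I_n) q y.
have m0 : 0 <= m by apply: sumr_ge0 => y _; case/andP: (q01 y).
have mn : m <= n%:R.
  rewrite /m -[n in n%:R]card_ord -sumr_const.
  by apply: ler_sum => y _; case/andP: (q01 y).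
have hm0 : 0 <= h * m by rewrite mulr_ge0 // ltW.
have hmn : h * m <= h * n%:R by rewrite ler_wpM2l // ltW.
set mu := h * cos (h * m).
pose d (y : 'I_n) := sin h * `|sin (phi + 2 * y%:R * h)|.
pose P := [set y | mu <= d y].
have Sa : sin h * \sum_(y : 'I_n) E y * sin (phi + 2 * y%:R * h) <= \sum_(y : 'I_n) q y * d y.
  rewrite big_distrr /=; apply: ler_sum => y _; rewrite /d.
  rewrite [X in _ <= X]mulrCA ler_pM2l //.
  apply: le_trans (ler_norm _) _; rewrite normrM.
  by apply: ler_wpM2r => //; apply: normr_ge0.
have Sb : \sum_(y : 'I_n) q y * d y = \sum_(y : 'I_n) q y * (d y - mu) + mu * m.
  rewrite /m big_distrr /= -big_split /=; apply: eq_bigr => y _; ring.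
have Sc : \sum_(y : 'I_n) q y * (d y - mu) <= \sum_(y in P) (d y - mu).
  rewrite (bigID (fun y : 'I_n => y \in P)) /= -[X in _ <= X]addr0; apply: lerD.
    apply: ler_sum => y; rewrite inE => H; case/andP: (q01 y) => q0 q1.
    by rewrite ler_piMl // subr_ge0.
  apply: sumr_le0 => y; rewrite inE -ltNge => H; case/andP: (q01 y) => q0 q1.
  by rewrite mulr_ge0_le0 // subr_le0 ltW.
have Sd : \sum_(y in P) (d y - mu) <= sin (#|P|%:R * h) - #|P|%:R * mu.
  rewrite sumrB sumr_const [#|P|%:R * mu]mulr_natl lerD2r /d -big_distrr /=.
  exact: LS.
have kn : (#|P| <= n)%N by apply: (leq_trans (max_card _)); rewrite card_ord.
have kR : #|P|%:R <= n%:R :> R by rewrite ler_nat.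
have kh0 : 0 <= #|P|%:R * h by rewrite mulr_ge0 // ltW.
have khn : #|P|%:R * h <= n%:R * h by rewrite ler_wpM2r // ltW.
have TL := @sin_tangent (#|P|%:R * h) (h * m).
have TL' : sin (#|P|%:R * h) <= sin (h * m) + cos (h * m) * (#|P|%:R * h - h * m).
  by apply: TL; apply/andP; split; rewrite ?hpi; nra.
have -> : sin (h * m) = sin (#|P|%:R * h) - #|P|%:R * mu + mu * m
   + (sin (h * m) + cos (h * m) * (#|P|%:R * h - h * m) - sin (#|P|%:R * h)).
  by rewrite /mu; ring.
apply: (le_trans Sa); rewrite Sb; lra.
Qed.

Lemma polar (a b : R) : exists phi,
  a = Num.sqrt (a ^+ 2 + b ^+ 2) * sin phi /\ b = Num.sqrt (a ^+ 2 + b ^+ 2) * cos phi.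
Proof.
set K := Num.sqrt (a ^+ 2 + b ^+ 2).
have K0 : 0 <= K := sqrtr_ge0 _.
have KK : K ^+ 2 = a ^+ 2 + b ^+ 2 by rewrite sqr_sqrtr // addr_ge0 // sqr_ge0.
have [Ke|Kn] := eqVneq K 0.
  exists 0; rewrite Ke !mul0r.
  have : a ^+ 2 + b ^+ 2 = 0 by rewrite -KK Ke expr0n.
  move=> H; split; nra.
have Kp : 0 < K by rewrite lt_def Kn.
set c := b / K.
have bK : `|b| <= K.
  rewrite -(ler_pXn2r (n := 2)) ?nnegrE ?normr_ge0 // KK real_normK ?num_real //.
  by rewrite lerDr sqr_ge0.
have c1 : -1 <= c <= 1.
  by rewrite /c -ler_norml normrM normfV (ger0_norm K0) ler_pdivrMr // mul1r.
have cK : K * c = b by rewrite /c mulrC divfK.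
have sc : Num.sqrt (1 - c ^+ 2) = `|a| / K.
  have -> : 1 - c ^+ 2 = (`|a| / K) ^+ 2.
    rewrite /c !expr_div_n real_normK ?num_real // -[1](@divff _ (K ^+ 2)) ?expf_neq0 //.
    by rewrite -mulrBl KK addrK.
  by rewrite sqrtr_sqr ger0_norm // divr_ge0.
exists (if 0 <= a then acos c else - acos c); split; last first.
  by case: ifP => _; rewrite ?cosN acosK ?cK // in_itv /=.
case: ifP => a0.
  by rewrite sin_acos // sc ger0_norm // mulrC divfK.
by rewrite sinN sin_acos // sc ltr0_norm ?ltNge ?a0 // mulrN mulrC divfK ?opprK.
Qed.

Lemma jensen_sin (I : finType) (w x : I -> R) : (forall i, 0 <= w i) ->
  \sum_i w i = 1 -> (forall i, 0 <= x i <= pi / 2) ->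
  \sum_i w i * sin (x i) <= sin (\sum_i w i * x i).
Proof.
move=> w0 w1 x0.
set M := \sum_i w i * x i.
have pi0 := pi_gt0 R.
have M0 : 0 <= M by apply: sumr_ge0 => i _; case/andP: (x0 i) => *; rewrite mulr_ge0.
have Mpi : M <= pi / 2.
  rewrite -[pi / 2]mul1r -{1}w1 big_distrl /=; apply: ler_sum => i _.
  by case/andP: (x0 i) => _ xi; apply: ler_wpM2l.
apply: (le_trans (y := \sum_i w i * (sin M + cos M * (x i - M)))).
  apply: ler_sum => i _; apply: ler_wpM2l => //; apply: sin_tangent;
    case/andP: (x0 i) => *; apply/andP; split; lra.
have E : forall i, w i * (sin M + cos M * (x i - M)) = (sin M - cos M * M) * w i + cos M * (w i * x i).
  by move=> i; ring.
rewrite (eq_bigr _ (fun i _ => E i)) big_split /= -!big_distrr /= w1 -/M.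
by rewrite mulr1 subrK.
Qed.
End T.

Section B.
Variable R : realType.
Local Open Scope complex_scope.
Local Notation C := R[i].
Local Notation re := (@complex.Re R).

Lemma cReD (x y : C) : re (x + y) = re x + re y. Proof. by case: x => a b; case: y => c d. Qed.
Lemma cRe_sum (I : Type) (r : seq I) (P : pred I) (F : I -> C) :
  re (\sum_(i <- r | P i) F i) = \sum_(i <- r | P i) re (F i).
Proof.
elim: r => [|x r IH]; first by rewrite !big_nil.
by rewrite !big_cons; case: (P x); rewrite ?cReD IH.
Qed.
Lemma cReC (r : R) : re (r%:C) = r. Proof. by []. Qed.
Lemma cReMl (r : R) (z : C) : re (r%:C * z) = r * re z.
Proof. by case: z => a b /=; rewrite mul0r subr0. Qed.
Lemma cReMr (r : R) (z : C) : re (z * r%:C) = re z * r.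
Proof. by rewrite mulrC cReMl mulrC. Qed.

Definition Zr (i j : 'I_2) : R := if i == j then (if i == 0 :> nat then 1 else -1) else 0.
Definition Xr (i j : 'I_2) : R := if i == j then 0 else 1.
Definition ARe (al : R) (a x : bool) (i j : 'I_2) : R :=
  1 / 2 * ((i == j)%:R + (-1) ^+ a * ((cos al / Num.sqrt 2) * (Zr i j + Xr i j)
       + ((-1) ^+ x * sin al / Num.sqrt 2) * (Zr i j - Xr i j))).

Lemma Aproj_E al a x i j : Aproj al a x i j = (ARe al a x i j)%:C.
Proof.
rewrite /Aproj /Aobs /ARe /pauliZ /pauliX /Zr /Xr !mxE.
rewrite !(rmorphM, rmorphD, rmorphB, rmorphN, rmorph1, rmorphXn, rmorph_nat, fmorphV).
by case: (i == j); case: (i == 0 :> nat); ring.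
Qed.

Definition o0 : 'I_2 := ord0.
Definition o1 : 'I_2 := ord_max.

Lemma trA al a x (rho : 'M[C]_2) :
  re (\tr (Aproj al a x *m rho)) =
  ((re (rho o0 o0) + re (rho o1 o1)) + (-1) ^+ a * ((cos al / Num.sqrt 2) *
     ((re (rho o0 o0) - re (rho o1 o1)) + (re (rho o0 o1) + re (rho o1 o0)))
   + ((-1) ^+ x * sin al / Num.sqrt 2) *
     ((re (rho o0 o0) - re (rho o1 o1)) - (re (rho o0 o1) + re (rho o1 o0))))) / 2.
Proof.
rewrite /mxtrace cRe_sum.
rewrite (eq_bigr (fun i => \sum_j ARe al a x i j * re (rho j i))); last first.
  by move=> i _; rewrite mxE cRe_sum; apply: eq_bigr => j _; rewrite Aproj_E cReMl.
rewrite !big_ord_recr !big_ord0 /= /ARe /Zr /Xr /= /o0 /o1.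
have -> : widen_ord (m:=2) (leqnSn 1) ord_max = ord0 by apply: val_inj.
ring.
Qed.

Lemma tr_re (rho : 'M[C]_2) : re (\tr rho) = re (rho o0 o0) + re (rho o1 o1).
Proof.
rewrite /mxtrace cRe_sum !big_ord_recr big_ord0 /= /o0 /o1 add0r.
by have -> : widen_ord (m:=2) (leqnSn 1) ord_max = ord0 by apply: val_inj.
Qed.

Lemma psd_re (M : 'M[C]_2) : psd M -> forall t1 t2 : R,
  0 <= t1 ^+ 2 * re (M o0 o0) + t1 * t2 * (re (M o0 o1) + re (M o1 o0))
       + t2 ^+ 2 * re (M o1 o1).
Proof.
move=> HM t1 t2.
pose v : 'cV[C]_2 := \col_i (if i == o0 then t1 else t2)%:C.
have := HM v; rewrite lecE => /andP[_].
rewrite /adjmx !mxE !big_ord_recr !big_ord0 /= !mxE /=.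
rewrite !big_ord_recr !big_ord0 /= !mxE /= /o0 /o1.
have -> : widen_ord (m:=2) (leqnSn 1) ord_max = ord0 by apply: val_inj.
rewrite !oppr0 !complexr0 !(cReD, cReMr, cReMl) /= => H.
rewrite expr2; nra.
Qed.

Lemma psd_bound (M : 'M[C]_2) : psd M ->
  [/\ 0 <= re (M o0 o0), 0 <= re (M o1 o1) &
      (re (M o0 o1) + re (M o1 o0)) ^+ 2 <= 4 * re (M o0 o0) * re (M o1 o1)].
Proof.
move=> HM; have Q := psd_re M HM.
set r0 := re (M o0 o0) in Q *; set r1 := re (M o1 o1) in Q *.
set Y := re (M o0 o1) + re (M o1 o0) in Q *.
have r00 : 0 <= r0 by have := Q 1 0; rewrite !expr2; lra.
have r10 : 0 <= r1 by have := Q 0 1; rewrite !expr2; lra.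
split => //.
have Q1 := Q (- Y) (2 * r0); have Q2 := Q (2 * r1) (- Y); have Q3 := Q 1 (- Y).
rewrite !expr2 in Q1 Q2 Q3 *.
have [r0p|r0e] := ltrP 0 r0.
  have : 0 <= r0 * (4 * r0 * r1 - Y * Y) by nra.
  by rewrite pmulr_rge0 // subr_ge0 => H; lra.
have [r1p|r1e] := ltrP 0 r1.
  have : 0 <= r1 * (4 * r0 * r1 - Y * Y) by nra.
  by rewrite pmulr_rge0 // subr_ge0 => H; lra.
have -> : r0 = 0 by lra.
have -> : r1 = 0 by lra.
have e0 : r0 = 0 by lra.
have e1 : r1 = 0 by lra.
rewrite e0 e1 in Q3; nra.
Qed.

Lemma gamma_ge (al : R) : 0 <= cos al -> 0 <= sin al ->
  cos al <= gammaF (s_alpha al) /\ sin al <= gammaF (s_alpha al).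
Proof.
move=> c0 s0; have cs := cos2Dsin2 al.
rewrite /gammaF /s_alpha.
have -> : 8 - (2 * (cos al + sin al)) ^+ 2 = (2 * (cos al - sin al)) ^+ 2.
  have : 8 - (2 * (cos al + sin al)) ^+ 2 - (2 * (cos al - sin al)) ^+ 2
     = 8 * (1 - (cos al ^+ 2 + sin al ^+ 2)) by ring.
  by rewrite cs subrr mulr0 => /eqP; rewrite subr_eq0 => /eqP.
rewrite sqrtr_sqr.
case: (lerP 0 (2 * (cos al - sin al))) => H.
  by rewrite ger0_norm //; split; lra.
by rewrite ltr0_norm //; split; lra.
Qed.
End B.

Theorem mainTheorem6 (R : realType) (n : nat) (alpha : R)
    (p : bool -> option bool -> bool -> 'I_n -> R) :
  (1 <= n)%N -> 0 <= alpha -> alpha <= pi / 2 ->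
  LHS_model alpha p ->
  n%:R * sin (pi / (2 * n%:R)) * Wn p
    <= Num.sqrt 2 * sin (pi / 2 * Tn p) * gammaF (s_alpha alpha).
Proof.
move=> n1 al0 alpi [k [rho [pb [Hpsd Htr Hpb0 Hpb1 Hp]]]].
have pi0 := pi_gt0 R.
have npos : 0 < n%:R :> R by rewrite ltr0n.
have nn0 : n%:R != 0 :> R by rewrite gt_eqF.
set h := pi / (2 * n%:R).
have h0 : 0 < h by rewrite /h divr_gt0 // mulr_gt0.
have hpi : pi = 2 * n%:R * h by rewrite /h; field.
have c0 : 0 <= cos alpha by apply: cos_ge0_pihalf; apply/andP; split; lra.
have s0 : 0 <= sin alpha by apply: sin_ge0_pi; apply/andP; split; lra.
have [gc gs] := @gamma_ge R alpha c0 s0.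
set g := gammaF (s_alpha alpha) in gc gs *.
clearbody g.
pose r0 l := complex.Re (rho l o0 o0).
pose r1 l := complex.Re (rho l o1 o1).
pose Y l := complex.Re (rho l o0 o1) + complex.Re (rho l o1 o0).
pose w l := r0 l + r1 l.
pose X l := r0 l - r1 l.
pose U l := cos alpha / Num.sqrt 2 * (X l + Y l).
pose V l := sin alpha / Num.sqrt 2 * (X l - Y l).
have pE : forall a b x y, p a b x y =
    \sum_l ((w l + (-1) ^+ a * (U l + (-1) ^+ x * V l)) / 2) * pb l y b.
  move=> a b x y; have := congr1 (@complex.Re R) (Hp a b x y).
  rewrite cReC cRe_sum => ->; apply: eq_bigr => l _.
  by rewrite cReMr trA /U /V /w /X /Y /r0 /r1; congr (_ * _); ring.
pose Phi l (y : 'I_n) := (pb l y (Some false) - pb l y (Some true)) *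
   ((U l + V l) * cos (@theta R n y) + (U l - V l) * sin (@theta R n y)).
have WE : Wn p = n%:R^-1 * \sum_(y < n) \sum_l Phi l y.
  rewrite /Wn; congr (_ * _); apply: eq_bigr => y _.
  rewrite !big_bool /sgn !pE.
  rewrite !big_distrr /= -!big_split /= !big_distrr /= -!big_split /=.
  by apply: eq_bigr => l _; rewrite /Phi !expr1 !expr0; field.
have LE : n%:R * sin h * Wn p = \sum_l sin h * \sum_(y < n) Phi l y.
  rewrite WE exchange_big /= -big_distrr /=.
  by field.
pose q l (y : 'I_n) := pb l y (Some true) + pb l y (Some false).
pose m l := \sum_(y < n) q l y.
have q01 : forall l y, 0 <= q l y <= 1.
  move=> l y; have := Hpb1 l y; rewrite opt_sum /q => H.
  have := Hpb0 l y None; have := Hpb0 l y (Some true); have := Hpb0 l y (Some false).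
  move=> *; apply/andP; split; lra.
have m0n : forall l, 0 <= h * m l <= pi / 2.
  move=> l; have m0 : 0 <= m l by apply: sumr_ge0 => y _; case/andP: (q01 l y).
  have mn : m l <= n%:R.
    rewrite /m -[n in n%:R]card_ord -sumr_const.
    by apply: ler_sum => y _; case/andP: (q01 l y).
  apply/andP; split; first by rewrite mulr_ge0 // ltW.
  rewrite hpi; nra.
have PB l := @psd_bound R (rho l) (Hpsd l).
have w0 : forall l, 0 <= w l by move=> l; case: (PB l) => *; rewrite /w addr_ge0.
have w1 : \sum_l w l = 1.
  have := congr1 (@complex.Re R) Htr; rewrite cRe_sum => H.
  rewrite (_ : 1 = complex.Re (1 : R[i])) // -H; apply: eq_bigr => l _.
  by rewrite tr_re.
have g0 : 0 <= g by lra.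
have r20 : 0 < Num.sqrt 2 :> R by rewrite sqrtr_gt0; lra.
have r22 : Num.sqrt 2 ^+ 2 = 2 :> R by rewrite sqr_sqrtr //; lra.
have Hl : forall l, sin h * \sum_(y < n) Phi l y <= Num.sqrt 2 * g * w l * sin (h * m l).
  move=> l.
  have [phi [Ea Eb]] := @polar R (U l + V l) (U l - V l).
  set K := Num.sqrt _ in Ea Eb.
  have K0 : 0 <= K := sqrtr_ge0 _.
  have PhiE : forall y, Phi l y = K * ((pb l y (Some false) - pb l y (Some true))
       * sin (phi + 2 * y%:R * h)).
    move=> y; rewrite /Phi Ea Eb.
    have -> : @theta R n y = 2 * y%:R * h by rewrite /theta /h; field.
    rewrite sinD; ring.
  rewrite (eq_bigr _ (fun y _ => PhiE y)) -big_distrr /= mulrCA.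
  have HE : forall y, `|pb l y (Some false) - pb l y (Some true)| <= q l y.
    move=> y; rewrite ler_norml /q.
    have := Hpb0 l y (Some true); have := Hpb0 l y (Some false).
    by move=> *; apply/andP; split; lra.
  have HC := @core R n phi (q l) (fun y => pb l y (Some false) - pb l y (Some true))
    n1 (q01 l) HE.
  rewrite -/h in HC.
  apply: le_trans (ler_wpM2l K0 HC) _.
  have sm0 : 0 <= sin (h * m l).
    by apply: sin_ge0_pi; case/andP: (m0n l) => *; apply/andP; split; lra.
  apply: ler_wpM2r => //.
  have E2 : (U l + V l) ^+ 2 + (U l - V l) ^+ 2
      = cos alpha ^+ 2 * (X l + Y l) ^+ 2 + sin alpha ^+ 2 * (X l - Y l) ^+ 2.
    have : (U l + V l) ^+ 2 + (U l - V l) ^+ 2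
      = (cos alpha ^+ 2 * (X l + Y l) ^+ 2 + sin alpha ^+ 2 * (X l - Y l) ^+ 2)
        * (2 / Num.sqrt 2 ^+ 2).
      by rewrite /U /V; field; lra.
    by rewrite r22 divff ?mulr1 //; lra.
  rewrite /K E2.
  have gw0 : 0 <= Num.sqrt 2 * g * w l by apply: mulr_ge0 => //; apply: mulr_ge0 => //; apply: ltW.
  rewrite -[X in _ <= X]ger0_norm // -sqrtr_sqr ler_sqrt ?sqr_ge0 //.
  rewrite !exprMn r22.
  case: (PB l) => r00 r10 HY.
  have XY : X l ^+ 2 + Y l ^+ 2 <= w l ^+ 2.
    rewrite /X /w !expr2 in HY *; nra.
  have cg : cos alpha ^+ 2 <= g ^+ 2 by rewrite !expr2; nra.
  have sg : sin alpha ^+ 2 <= g ^+ 2 by rewrite !expr2; nra.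
  have A0 : 0 <= (X l + Y l) ^+ 2 := sqr_ge0 _.
  have B0 : 0 <= (X l - Y l) ^+ 2 := sqr_ge0 _.
  have H1 : cos alpha ^+ 2 * (X l + Y l) ^+ 2 <= g ^+ 2 * (X l + Y l) ^+ 2 by apply: ler_wpM2r.
  have H2 : sin alpha ^+ 2 * (X l - Y l) ^+ 2 <= g ^+ 2 * (X l - Y l) ^+ 2 by apply: ler_wpM2r.
  have H3 : g ^+ 2 * (X l ^+ 2 + Y l ^+ 2) <= g ^+ 2 * w l ^+ 2 by apply: ler_wpM2l; rewrite ?sqr_ge0.
  have E3 : g ^+ 2 * (X l + Y l) ^+ 2 + g ^+ 2 * (X l - Y l) ^+ 2 = 2 * (g ^+ 2 * (X l ^+ 2 + Y l ^+ 2)) by ring.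
  lra.
have TE : pi / 2 * Tn p = \sum_l w l * (h * m l).
  rewrite /Tn /pB.
  have inner : forall y, \sum_(b : bool) \sum_(a : bool) p a (Some b) false y
      = \sum_l w l * q l y.
    move=> y; rewrite !big_bool !pE -!big_split /=.
    by apply: eq_bigr => l _; rewrite /q !expr1 !expr0; field.
  rewrite (eq_bigr _ (fun y _ => inner y)) exchange_big /=.
  rewrite big_distrr /= big_distrr /=; apply: eq_bigr => l _.
  by rewrite /m -big_distrr /= /h; field.
rewrite LE TE.
apply: le_trans (ler_sum _ (fun l _ => Hl l)) _.
have J := @jensen_sin R _ w (fun l => h * m l) w0 w1 m0n.
rewrite (eq_bigr (fun l => (Num.sqrt 2 * g) * (w l * sin (h * m l)))); last first.
  by move=> l _; rewrite !mulrA.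
rewrite -big_distrr /= mulrAC.
by apply: ler_wpM2r => //; apply: ler_wpM2l => //; apply: ltW.
Qed.
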